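(* Let $\mathcal F$ be the set of ordered pairs of reduced fractions $\left(\frac ab,\frac cd\right)$ (with $a,c\ge 0$, $b,d\ge1$ integers) such that $0\le \frac ab<\frac cd\le 1$ and $ad-bc=-1$, and let $\mathcal F^*=\{(\frac01,\frac1n): n\in\mathbb N\}$. Then \[ \sum_{\left(\frac ab,\frac cd\right)\in\mathcal F\setminus\mathcal F^*}\frac{ab+cd+(a+c)(b+d)}{\big(abcd(a+c)(b+d)\big)^2}=7-12\gamma, \] where $\gamma$ is the Euler–Mascheroni constant.
   Context: $\mathcal F$ is the set of pairs of consecutive Farey fractions in $[0,1]$. *)

(* Defs.v *)
From HB Require Import structures.
From mathcomp Require Import all_boot all_order all_algebra.
From mathcomp Require Import all_classical all_reals all_analysis.
Set Implicit Arguments. Unset Strict Implicit. Unset Printing Implicit Defensive.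
Import Order.TTheory GRing.Theory Num.Theory.
Import numFieldNormedType.Exports.
Local Open Scope classical_set_scope.
Local Open Scope ring_scope.

Definition euler_gamma (R : realType) : R :=
  lim ((fun n : nat => \sum_(1 <= k < n.+1) (k%:R : R)^-1 - ln (n%:R : R)) @ \oo).

(* A quadruple (a,b,c,d) encodes the ordered pair of fractions (a/b, c/d). *)
Definition farey_pairs (R : realType) : set (nat * nat * nat * nat) :=
  [set x | let: (a, b, c, d) := x in
     (0 < b)%N /\ (0 < d)%N /\ coprime a b /\ coprime c d /\
     (0 : R) <= a%:R / b%:R /\ (a%:R / b%:R : R) < c%:R / d%:R /\
     (c%:R / d%:R : R) <= 1 /\
     (a%:Z * d%:Z - b%:Z * c%:Z = - 1)%R].

Definition farey_star : set (nat * nat * nat * nat) :=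
  [set x | exists n : nat, x = (0%N, 1%N, 1%N, n)].

Definition farey_term (R : realType) (x : nat * nat * nat * nat) : R :=
  let: (a, b, c, d) := x in
  ((a * b + c * d + (a + c) * (b + d))%:R) /
  (((a * b * c * d * (a + c) * (b + d))%:R) ^+ 2).

(* Main.v *)
Require Import Defs.
From HB Require Import structures.
From mathcomp Require Import all_boot all_order all_algebra.
From mathcomp Require Import all_classical all_reals all_analysis.
From mathcomp Require Import ring lra zify.
Import Order.TTheory GRing.Theory Num.Theory.
Import numFieldNormedType.Exports.
Local Open Scope classical_set_scope.
Local Open Scope ring_scope.
Definition quad := (nat * nat * nat * nat)%type.
Definition inG (w : quad) : Prop := let '(a,b,c,d) := w in
  [/\ (0 < a)%N, (0 < d)%N, (b * c = a * d + 1)%N & (c <= d)%N].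
Definition Lc (w : quad) : quad := let '(a,b,c,d) := w in (a, b, a + c, b + d)%N.
Definition Rc (w : quad) : quad := let '(a,b,c,d) := w in (a + c, b + d, c, d)%N.
Definition sq (w : quad) : nat := let '(a,b,c,d) := w in (a * d)%N.
Definition isroot (w : quad) : Prop := let '(a,b,c,d) := w in
  a = 1%N /\ c = 1%N /\ b = d.+1.
Definition par (w : quad) : quad := let '(a,b,c,d) := w in
  if (d < b)%N then (a - c, b - d, c, d)%N else (a, b, c - a, d - b)%N.
Definition vr (n : nat) : quad := (1, n.+1, 1, n)%N.

Lemma inG_Lc {w} : inG w -> inG (Lc w).
Proof. case: w => [[[a b] c] d] [] /= *; split; nia. Qed.
Lemma inG_Rc {w} : inG w -> inG (Rc w).
Proof. case: w => [[[a b] c] d] [] /= *; split; nia. Qed.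
Lemma par_Lc {w} : inG w -> par (Lc w) = w.
Proof.
case: w => [[[a b] c] d] [] /= *; case: ifP => h; first by lia.
by congr (_,_,_,_); lia.
Qed.
Lemma par_Rc {w} : inG w -> par (Rc w) = w.
Proof.
case: w => [[[a b] c] d] [] /= a0 d0 e cd.
have b0 : (0 < b)%N by destruct b; lia.
case: ifP => h; last by lia.
by congr (_,_,_,_); lia.
Qed.
Lemma sq_Lc {w} : inG w -> (sq w < sq (Lc w))%N.
Proof.
case: w => [[[a b] c] d] [] /= a0 d0 e cd.
have b0 : (0 < b)%N by destruct b; lia.
nia.
Qed.
Lemma sq_Rc {w} : inG w -> (sq w < sq (Rc w))%N.
Proof.
case: w => [[[a b] c] d] [] /= a0 d0 e cd.
have c0 : (0 < c)%N by destruct c; lia.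
nia.
Qed.
Lemma notroot_Lc {w} : inG w -> ~ isroot (Lc w).
Proof.
case: w => [[[a b] c] d] [] /= a0 d0 e cd.
have c0 : (0 < c)%N by destruct c; lia.
lia.
Qed.
Lemma notroot_Rc {w} : inG w -> ~ isroot (Rc w).
Proof.
case: w => [[[a b] c] d] [] /= a0 d0 e cd.
have c0 : (0 < c)%N by destruct c; lia.
lia.
Qed.
Lemma Lc_inj : injective Lc.
Proof.
move=> [[[a b] c] d] [[[a' b'] c'] d'] /= [] *; congr (_,_,_,_); lia.
Qed.
Lemma Rc_inj : injective Rc.
Proof.
move=> [[[a b] c] d] [[[a' b'] c'] d'] /= [] *; congr (_,_,_,_); lia.
Qed.
Lemma Lc_neq_Rc {w w'} : inG w -> inG w' -> Lc w <> Rc w'.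
Proof.
move=> Gw Gw' E.
have : par (Lc w) = par (Rc w') by rewrite E.
rewrite par_Lc // par_Rc // => ew; subst w'.
clear Gw'; move: Gw E; case: w => [[[a b] c] d] [] /= a0 d0 e cd [] *.
have c0 : (0 < c)%N by destruct c; lia.
lia.
Qed.
Lemma par_spec {u} : inG u -> ~ isroot u ->
  inG (par u) /\ (u = Lc (par u) \/ u = Rc (par u)).
Proof.
case: u => [[[a b] c] d] [] /= a0 d0 e cd nr.
have c0 : (0 < c)%N by destruct c; lia.
have b0 : (0 < b)%N by destruct b; lia.
case: ifP => h.
- have ac : (c < a)%N.
    have : (c <= a)%N by nia.
    rewrite leq_eqVlt => /orP[/eqP ca|//]; subst c.
    exfalso; apply: nr; nia.
  split; first by split; nia.
  by right; congr (_,_,_,_); lia.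
- have ca : (a < c)%N by nia.
  split; first by split; nia.
  by left; congr (_,_,_,_); lia.
Qed.
Lemma vr_inj : injective vr.
Proof. by move=> m n [] ->. Qed.
Lemma root_vr {w} : inG w -> isroot w -> w = vr (sq w) /\ (0 < sq w)%N.
Proof.
case: w => [[[a b] c] d] [] /= a0 d0 e cd [-> [-> ->]].
by rewrite /vr mul1n.
Qed.
Lemma inG_vr n : (0 < n)%N -> inG (vr n) /\ isroot (vr n) /\ sq (vr n) = n.
Proof. by move=> n0; rewrite /vr /=; split; [split; lia|split; [|lia]]. Qed.
Definition GN (N : nat) : set quad := [set w | inG w /\ (sq w <= N)%N].
Definition Fr (N : nat) : set quad :=
  [set w | inG w /\ ~ isroot w /\ (N < sq w)%N /\ (sq (par w) <= N)%N].

Lemma GN_fin N : finite_set (GN N).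
Proof.
apply: (@sub_finite_set _ _ (((`I_N.+2 `*` `I_N.+2) `*` `I_N.+2) `*` `I_N.+2)).
  move=> [[[a b] c] d] [] [] /= a0 d0 e cd le.
  have b0 : (0 < b)%N by destruct b; lia.
  have c0 : (0 < c)%N by destruct c; lia.
  rewrite /= /setX /=; nia.
by apply: finite_setX; [apply: finite_setX; [apply: finite_setX|]|]; apply: finite_II.
Qed.

Lemma Fr_sub N : Fr N `<=` Lc @` GN N `|` Rc @` GN N.
Proof.
move=> u [Gu [nr [lt le]]].
have [Gp [e|e]] := par_spec Gu nr.
  by left; exists (par u) => //.
by right; exists (par u).
Qed.

Lemma Fr_fin N : finite_set (Fr N).
Proof.
apply: sub_finite_set (Fr_sub N) _.
by rewrite finite_setU; split; apply: finite_image; apply: GN_fin.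
Qed.

Lemma children_eq N :
  Lc @` GN N `|` Rc @` GN N = (GN N `&` ~` isroot) `|` Fr N.
Proof.
apply/seteqP; split.
- move=> u [] [w [Gw le] <-].
  + have := sq_Lc Gw; have := inG_Lc Gw; have := notroot_Lc Gw => nr G' lt.
    case: (leqP (sq (Lc w)) N) => h.
      by left; split => //; split.
    by right; split => //; split => //; split => //; rewrite par_Lc.
  + have := sq_Rc Gw; have := inG_Rc Gw; have := notroot_Rc Gw => nr G' lt.
    case: (leqP (sq (Rc w)) N) => h.
      by left; split => //; split.
    by right; split => //; split => //; split => //; rewrite par_Rc.
- move=> u [[[Gu le] nr]|fr]; last by apply: Fr_sub.
  have [Gp [e|e]] := par_spec Gu nr.
  + left; exists (par u) => //; split => //.
    apply: leq_trans (ltnW _) le.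
    by rewrite [in X in (_ < sq X)%N]e; apply: sq_Lc.
  + right; exists (par u) => //; split => //.
    apply: leq_trans (ltnW _) le.
    by rewrite [in X in (_ < sq X)%N]e; apply: sq_Rc.
Qed.

Section Tele.
Variable R : realType.

Lemma tele (phi : quad -> R) N :
  \sum_(w \in GN N) (phi w - phi (Lc w) - phi (Rc w)) =
  \sum_(w \in GN N `&` isroot) phi w - \sum_(w \in Fr N) phi w.
Proof.
have fG := GN_fin N.
have -> : \sum_(w \in GN N) (phi w - phi (Lc w) - phi (Rc w)) =
   \sum_(w \in GN N) phi w - \sum_(w \in GN N) phi (Lc w) - \sum_(w \in GN N) phi (Rc w).
  by rewrite !fsbig_finite // -!sumrB.
rewrite -(fsbig_image _ _ _ (in2W Lc_inj)) -(fsbig_image _ _ _ (in2W Rc_inj)).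
rewrite -addrA -opprD -fsbigU0; first last.
- move=> u [[w [Gw _] <-] [w' [Gw' _]]] /esym; exact: Lc_neq_Rc.
- exact: finite_image.
- exact: finite_image.
rewrite children_eq fsbigU0; first last.
- by move=> u [[[_ le] _] [_ [_ [lt _]]]]; move: lt; rewrite ltnNge le.
- exact: Fr_fin.
- exact: finite_setIl.
rewrite [\sum_(w \in GN N) phi w](fsbigID isroot) // /=.
ring.
Qed.

End Tele.
Section Roots.
Variable R : realType.
Lemma root_sum (phi : quad -> R) N :
  \sum_(w \in GN N `&` isroot) phi w = \sum_(1 <= n < N.+1) phi (vr n).
Proof.
have -> : GN N `&` isroot = [set` [seq vr n | n <- index_iota 1 N.+1]].
  apply/seteqP; split.
  - move=> w [[Gw le] rt]; have [e n0] := root_vr Gw rt.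
    by apply/mapP; exists (sq w) => //; rewrite mem_index_iota n0 ltnS.
  - move=> w /=; case/mapP => n; rewrite mem_index_iota => /andP[n1 nN] ->.
    have [Gv [rv sv]] := inG_vr _ n1.
    by split => //; split => //; rewrite sv -ltnS.
rewrite -fsbig_seq ?big_map //.
by rewrite map_inj_uniq ?iota_uniq //; exact: vr_inj.
Qed.
End Roots.
Section Anal.
Variable R : realType.

Definition rpart (s : nat) : R :=
  (s%:R ^+ 2)^-1 - (s.+1%:R ^+ 2)^-1 - 6 * (s%:R)^-1 - 6 * (s.+1%:R)^-1.
Definition hh (s : nat) : R := ln (1 + (s%:R)^-1).
Definition gg (s : nat) : R := rpart s + 12 * hh s.

Lemma term_id (a b c d : nat) : (0 < a)%N -> (0 < b)%N -> (0 < d)%N ->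
  (b * c = a * d + 1)%N ->
  farey_term R (a, b, c, d) = rpart (a * d) - rpart (a * (b + d)) - rpart ((a + c) * d).
Proof.
move=> a0 b0 d0 hbc.
have c0 : (0 < c)%N by destruct c; lia.
rewrite /farey_term /rpart.
have e1 : ((a*d).+1 = b * c)%N by rewrite hbc addn1.
have e2 : ((a*(b+d)).+1 = b * (a + c))%N by rewrite mulnDr mulnDr hbc; lia.
have e3 : (((a+c)*d).+1 = (b + d) * c)%N by rewrite mulnDl mulnDl hbc; lia.
rewrite e1 e2 e3 !(natrM, natrD).
have hb : (b%:R : R) != 0 by rewrite pnatr_eq0 -lt0n.
have ha : (a%:R : R) != 0 by rewrite pnatr_eq0 -lt0n.
have hd : (d%:R : R) != 0 by rewrite pnatr_eq0 -lt0n.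
have hc' : (c%:R : R) != 0 by rewrite pnatr_eq0 -lt0n.
have hC : (c%:R : R) = (a%:R * d%:R + 1) / b%:R.
  apply: (mulIf hb); rewrite mulfVK //; have h := congr1 (fun n : nat => (n%:R : R)) hbc; rewrite /= natrD !natrM in h; by rewrite mulrC h.
have hac : (a%:R + c%:R : R) != 0 by rewrite -natrD pnatr_eq0 addn_eq0 negb_and -!lt0n a0.
have hbd : (b%:R + d%:R : R) != 0 by rewrite -natrD pnatr_eq0 addn_eq0 negb_and -!lt0n b0.
move: hac; rewrite hC => hac.
have hc2 : (a%:R * d%:R + 1 : R) != 0 by rewrite -natrM -(natrD _ _ 1) pnatr_eq0 addn1.
have h5 : (a%:R * b%:R + (a%:R * d%:R + 1) : R) != 0.
  by rewrite -!natrM -(natrD _ _ 1) -natrD pnatr_eq0 addn1 addnS.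
field. by rewrite hb hc2 hbd hd h5 ha.
Qed.

Lemma hh_split {w} : inG w -> hh (sq w) = hh (sq (Lc w)) + hh (sq (Rc w)).
Proof.
case: w => [[[a b] c] d] [] /= a0 d0 hbc cd.
have c0 : (0 < c)%N by destruct c; lia.
have b0 : (0 < b)%N by destruct b; lia.
rewrite /hh -lnM; first last.
- by rewrite posrE; apply: addr_gt0 => //; rewrite invr_gt0 ltr0n muln_gt0 addn_gt0 c0 d0 ?orbT.
- by rewrite posrE; apply: addr_gt0 => //; rewrite invr_gt0 ltr0n muln_gt0 addn_gt0 a0 b0 ?orbT.
congr ln.
have hb : (b%:R : R) != 0 by rewrite pnatr_eq0 -lt0n.
have ha : (a%:R : R) != 0 by rewrite pnatr_eq0 -lt0n.
have hd : (d%:R : R) != 0 by rewrite pnatr_eq0 -lt0n.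
have hC : (c%:R : R) = (a%:R * d%:R + 1) / b%:R.
  apply: (mulIf hb); rewrite mulfVK //; have h := congr1 (fun n : nat => (n%:R : R)) hbc; rewrite /= natrD !natrM in h; by rewrite mulrC h.
have hac : (a%:R + c%:R : R) != 0 by rewrite -natrD pnatr_eq0 addn_eq0 negb_and -!lt0n a0.
have hbd : (b%:R + d%:R : R) != 0 by rewrite -natrD pnatr_eq0 addn_eq0 negb_and -!lt0n b0.
rewrite !(natrM, natrD).
move: hac; rewrite hC => hac.
have hc2 : (a%:R * d%:R + 1 : R) != 0 by rewrite -natrM -(natrD _ _ 1) pnatr_eq0 addn1.
have h5 : (a%:R * b%:R + (a%:R * d%:R + 1) : R) != 0.
  by rewrite -!natrM -(natrD _ _ 1) -natrD pnatr_eq0 addn1 addnS.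
field. by rewrite hb h5 hbd hd ha.
Qed.

Lemma term_G w : inG w ->
  farey_term R w = gg (sq w) - gg (sq (Lc w)) - gg (sq (Rc w)).
Proof.
move=> Gw; have := hh_split Gw.
case: w Gw => [[[a b] c] d] [] a0 d0 hbc cd hs.
have b0 : (0 < b)%N by destruct b; lia.
rewrite term_id // /gg hs /=; ring.
Qed.

End Anal.
Section Bounds.
Variable R : realType.

Lemma hh_bounds (s : nat) : (0 < s)%N ->
  (s.+1%:R : R)^-1 <= hh R s /\ hh R s <= (s%:R)^-1.
Proof.
move=> s0.
have sp : (0 : R) < s%:R by rewrite ltr0n.
split; last first.
  rewrite /hh; apply: le_ln1Dx; apply: (lt_le_trans (y := 0)); first by rewrite ltrN10.
  by rewrite invr_ge0 ltW.
have e : (1 + (s%:R)^-1 : R) = (1 + (- (s.+1%:R)^-1))^-1.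
  rewrite -natr1; field.
  by rewrite addrK natr1 !pnatr_eq0 /= -lt0n.
rewrite /hh e lnV; last first.
  by rewrite posrE subr_gt0 invf_lt1 ?ltr0n // ltr1n ltnS.
rewrite lerNr; apply: le_ln1Dx.
rewrite ltrN2 invf_lt1 ?ltr1n // ltr0n.
Qed.

Lemma gg_fr (N s : nat) : (0 < N)%N -> (N < s)%N ->
  `|gg R s| <= 16 / N%:R * hh R s.
Proof.
move=> N0 Ns.
have s0 : (0 < s)%N by apply: leq_trans N0 (ltnW Ns).
have [hl hu] := @hh_bounds s s0.
set x : R := (s%:R)^-1; set y : R := (s.+1%:R)^-1.
have hl' : y <= hh R s by exact: hl.
have hu' : hh R s <= x by exact: hu.
clear hl hu.
have sp : (0 : R) < s%:R by rewrite ltr0n.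
have x0 : 0 < x by rewrite invr_gt0.
have y0 : 0 < y by rewrite invr_gt0 ltr0n.
have xy : x - y = x * y.
  rewrite /x /y -natr1; field; by rewrite ?natr1 ?pnatr_eq0 /= -?lt0n ?s0.
have yx : y <= x by rewrite -subr_ge0 xy mulr_ge0 // ltW.
have x1 : x <= 1 by rewrite /x invf_le1 // ler1n.
have x2y : x <= 2 * y.
  have h : x * y <= y by rewrite ler_piMl // ltW.
  lra.
have xN : x <= (N%:R)^-1.
  by rewrite /x lef_pV2 ?posrE ?ltr0n // ?(leq_trans N0 (ltnW Ns)) // ler_nat ltnW.
have gx : `|gg R s| <= 8 * x ^+ 2.
  rewrite /gg /rpart -/x -/y -!exprVn -/x -/y.
  have h1 : x * y <= x * x by rewrite ler_pM2l.
  have h2 : y * y <= x * x by rewrite ler_pM // ltW.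
  have q0 : 0 <= x * x by rewrite mulr_ge0 // ltW.
  have r0 : 0 <= y * y by rewrite mulr_ge0 // ltW.
  rewrite ler_norml !expr2.
  move: (x * x) (y * y) (x * y) h1 h2 q0 r0 xy => q r p h1 h2 q0 r0 xy'.
  apply/andP; split; lra.
apply: (le_trans gx).
have hx : x * x <= (N%:R)^-1 * (2 * hh R s).
  apply: ler_pM; [exact: ltW | exact: ltW | exact: xN | lra].
have -> : 16 / N%:R * hh R s = 8 * ((N%:R)^-1 * (2 * hh R s)) by ring.
by rewrite expr2 ler_pM2l.
Qed.
End Bounds.
Section Gamma.
Variable R : realType.

Definition Hn (M : nat) : R := \sum_(1 <= k < M.+1) (k%:R)^-1.
Definition cc (M : nat) : R := Hn M - ln (M%:R).

Lemma lnS n : ln (n.+2%:R : R) = ln (n.+1%:R) + hh R n.+1.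
Proof.
rewrite /hh -lnM; first last.
- by rewrite posrE; apply: addr_gt0 => //; rewrite invr_gt0 ltr0n.
- by rewrite posrE ltr0n.
congr ln; rewrite mulrDr mulr1 divff ?pnatr_eq0 //.
by rewrite natr1.
Qed.

Lemma lnsum n : \sum_(1 <= k < n.+1) hh R k = ln (n.+1%:R).
Proof.
elim: n => [|n IH]; first by rewrite big_geq // ln1.
by rewrite big_nat_recr //= IH lnS.
Qed.

Lemma HnS n : Hn n.+1 = Hn n + (n.+1%:R)^-1.
Proof. by rewrite /Hn big_nat_recr. Qed.

Lemma cc_step n : cc n.+2 <= cc n.+1.
Proof.
rewrite /cc HnS lnS.
have [hl _] := @hh_bounds R n.+1 (ltn0Sn n).
move: (Hn n.+1) (ln (n.+1%:R : R)) (hh R n.+1) ((n.+2%:R : R)^-1) hl => H L h a hl; lra.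
Qed.

Lemma cc_ge0 n : 0 <= cc n.+1.
Proof.
rewrite /cc HnS -lnsum subr_ge0.
apply: (le_trans (y := Hn n)); last by rewrite lerDl invr_ge0.
rewrite /Hn; apply: ler_sum_nat => k /andP[k1 _].
by have [_ hu] := @hh_bounds R k k1.
Qed.

Lemma cc_cvg : cc @ \oo --> euler_gamma R.
Proof.
pose c' := fun n => cc n.+1.
have ni : nonincreasing_seq c' by apply/nonincreasing_seqP => n; exact: cc_step.
have lb : has_lbound (range c') by exists 0 => _ [n _ <-]; exact: cc_ge0.
have h : cc @ \oo --> inf (c' @` setT).
  by rewrite -cvg_shiftS; exact: nonincreasing_cvgn.
have -> : euler_gamma R = inf (c' @` setT).
  by rewrite /euler_gamma -/(cc) (cvg_lim _ h).
exact: h.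
Qed.

End Gamma.
Section Gsum.
Variable R : realType.

Lemma gsum n : \sum_(1 <= k < n.+1) gg R k =
  7 - ((n.+1%:R : R) ^+ 2)^-1 + 6 * (n.+1%:R)^-1 - 12 * cc R n.+1.
Proof.
elim: n => [|n IH].
  rewrite big_geq // /cc /Hn big_nat1 ln1 invr1 expr1n invr1; lra.
rewrite big_nat_recr //= IH /cc [Hn R n.+2]HnS lnS /gg /rpart -!exprVn.
move: (Hn R n.+1) (ln (n.+1%:R : R)) (hh R n.+1) ((n.+1%:R : R)^-1) ((n.+2%:R : R)^-1) => H L h a b.
ring.
Qed.

Lemma gsum_cvg : (fun n => \sum_(1 <= k < n.+1) gg R k) @ \oo --> 7 - 12 * euler_gamma R.
Proof.
rewrite (_ : (fun n => _) = fun n => 7 - harmonic n * harmonic n + 6 * harmonic n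
   - 12 * cc R n.+1); last first.
  apply: funext => n; rewrite gsum /harmonic /= -expr2 exprVn //.
have hc : (fun n => cc R n.+1) @ \oo --> euler_gamma R.
  by rewrite (cvg_shiftS (fun n => cc R n)); exact: cc_cvg.
have h0 := @cvg_harmonic R.
have h1 : (fun n => harmonic n * harmonic n) @ \oo --> (0:R) * 0 by apply: cvgM.
have h2 : (fun n => 6 * harmonic n) @ \oo --> 6 * (0:R) by apply: cvgM => //; exact: cvg_cst.
have h3 : (fun n => 12 * cc R n.+1) @ \oo --> 12 * euler_gamma R by apply: cvgM => //; exact: cvg_cst.
have := cvgB (cvgD (cvgB (cvg_cst (7:R)) h1) h2) h3.
rewrite mul0r mulr0 subr0 addr0; apply.
Qed.

End Gsum.
Section U.
Variable R : realType.
Definition uu N : R := \sum_(w \in GN N) farey_term R w.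
Definition EE N : R := \sum_(w \in Fr N) gg R (sq w).

Lemma uu_eq N : uu N = \sum_(1 <= n < N.+1) gg R n - EE N.
Proof.
rewrite /uu (@eq_fsbigr _ _ _ _ _ (fun w => gg R (sq w) - gg R (sq (Lc w)) - gg R (sq (Rc w)))); last first.
  by move=> w; rewrite inE => -[Gw _]; exact: term_G.
rewrite (tele R (fun w => gg R (sq w))) root_sum.
by congr (_ - _); apply: eq_bigr => n _; rewrite /= mul1n.
Qed.

Lemma hfr N : \sum_(w \in Fr N) hh R (sq w) = \sum_(1 <= n < N.+1) hh R n.
Proof.
have := tele R (fun w => hh R (sq w)) N.
rewrite (@eq_fsbigr _ _ _ _ _ (fun w => 0)); last first.
  by move=> w; rewrite inE => -[Gw _]; rewrite /= (hh_split R Gw); ring.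
rewrite fsbig1 // root_sum => /eqP; rewrite eq_sym subr_eq0 => /eqP <-.
by apply: eq_bigr => n _; rewrite /= mul1n.
Qed.

Lemma EE_bound N : (0 < N)%N -> `|EE N| <= 16 / N%:R * Hn R N.
Proof.
move=> N0.
have fF := Fr_fin N.
apply: (le_trans (y := 16 / N%:R * \sum_(w \in Fr N) hh R (sq w))).
  rewrite /EE !fsbig_finite // mulr_sumr.
  apply: (le_trans (ler_norm_sum _ _ _)).
  rewrite big_seq [X in _ <= X]big_seq; apply: ler_sum => w.
  rewrite in_fset_set // inE => -[_ [_ [lt _]]].
  exact: gg_fr.
rewrite hfr ler_pM2l ?divr_gt0 ?ltr0n //.
apply: ler_sum_nat => k /andP[k1 _].
by have [_ hu] := @hh_bounds R k k1.
Qed.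

End U.
Section Final.
Variable R : realType.

Lemma EE_cvg : (fun n => EE R n.+1) @ \oo --> (0 : R).
Proof.
have hv : (fun n => 16 * arithmetic_mean (@harmonic R) n) @ \oo --> (0:R).
  rewrite -(mulr0 16); apply: cvgM; first exact: cvg_cst.
  exact: cesaro (@cvg_harmonic R).
apply/cvgr0Pnorm_lt => e e0.
move/cvgr0Pnorm_lt: hv => /(_ e e0); apply: filterS => n hn.
apply: le_lt_trans (le_lt_trans (ler_norm _) hn).
apply: (le_trans (@EE_bound R n.+1 (ltn0Sn n))).
rewrite [X in _ <= X](_ : _ = 16 / n.+1%:R * Hn R n.+1) //.
rewrite /arithmetic_mean /= mulrA; congr (_ * _).
rewrite /Hn /series /= big_add1 /=.
by apply: eq_bigr.
Qed.

Lemma uu_cvg : uu R @ \oo --> 7 - 12 * euler_gamma R.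
Proof.
rewrite -cvg_shiftS.
have hg := gsum_cvg R; rewrite -cvg_shiftS in hg.
suff -> : [sequence uu R n.+1]_n = (fun n => \sum_(1 <= k < n.+2) gg R k - EE R n.+1).
  by have := cvgB hg EE_cvg; rewrite subr0; apply.
by apply: funext => n; rewrite /= uu_eq.
Qed.

Lemma term_ge0 w : 0 <= farey_term R w.
Proof.
by case: w => [[[a b] c] d]; rewrite /farey_term divr_ge0 // exprn_ge0.
Qed.

Lemma uu_ndecr : nondecreasing_seq (uu R).
Proof.
apply/nondecreasing_seqP => n.
have f1 := GN_fin n; have f2 := GN_fin n.+1.
rewrite -lee_fin /uu -!fsumEFin //.
apply: lee_fsum_nneg_subset; [exact: GN_fin | exact: GN_fin | |].
  by move=> w; rewrite !inE => -[Gw le]; split => //; apply: leqW.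
by move=> w _; rewrite lee_fin term_ge0.
Qed.

End Final.
Lemma D_eq (R : realType) : farey_pairs R `\` farey_star = [set w | inG w].
Proof.
apply/seteqP; split => [[[[a b] c] d]|[[[a b] c] d]] /=.
- move=> [[b0 [d0 [cab [ccd [h0 [hlt [hle hz]]]]]]] nstar].
  have e : (b * c = a * d + 1)%N by lia.
  have cd : (c <= d)%N.
    by move: hle; rewrite ler_pdivrMr ?ltr0n // mul1r ler_nat.
  split => //.
  rewrite lt0n; apply/negP => /eqP a0; apply: nstar; exists d.
  subst a; move: e; rewrite mul0n add0n => /eqP; rewrite muln_eq1 => /andP[/eqP -> /eqP ->].
  by [].
- move=> [a0 d0 e cd].
  have b0 : (0 < b)%N by destruct b; lia.
  have c0 : (0 < c)%N by destruct c; lia.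
  split; last first.
    by move=> [n] [a0']; move: a0; rewrite a0'.
  split => //; split => //; split.
    rewrite /coprime -dvdn1.
    have h1 : (gcdn a b %| a * d)%N by apply: dvdn_mulr; apply: dvdn_gcdl.
    have h2 : (gcdn a b %| b * c)%N by apply: dvdn_mulr; apply: dvdn_gcdr.
    by move: h2; rewrite e dvdn_addr.
  split.
    rewrite /coprime -dvdn1.
    have h1 : (gcdn c d %| a * d)%N by apply: dvdn_mull; apply: dvdn_gcdr.
    have h2 : (gcdn c d %| b * c)%N by apply: dvdn_mull; apply: dvdn_gcdl.
    by move: h2; rewrite e dvdn_addr.
  split; first by rewrite divr_ge0.
  split.
    rewrite ltr_pdivrMr ?ltr0n // mulrAC ltr_pdivlMr ?ltr0n // -!natrM ltr_nat.
    by rewrite (mulnC c b) e addn1.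
  split; first by rewrite ler_pdivrMr ?ltr0n // mul1r ler_nat.
  lia.
Qed.
Lemma fin_GN (X : set quad) : finite_set X -> X `<=` [set w | inG w] ->
  exists N, X `<=` GN N.
Proof.
move=> /finite_fsetP [F ->] XG.
exists (\max_(w <- finmap.enum_fset F) sq w) => w Fw; split; first exact: XG.
by apply: (@leq_bigmax_seq _ (finmap.enum_fset F) xpredT sq w).
Qed.

Theorem theorem13 (R : realType) :
  (\esum_(x in farey_pairs R `\` farey_star) (farey_term R x)%:E)%E
  = ((7 : R) - 12 * euler_gamma R)%:E.
Proof.
rewrite D_eq.
set L := (7 : R) - 12 * euler_gamma R.
have uL : forall N, uu R N <= L.
  move=> N; rewrite /L -(cvg_lim (@norm_hausdorff _ _) (uu_cvg R)).
  exact: nondecreasing_cvgn_le (uu_ndecr R) (cvgP _ (uu_cvg R)) N.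
have uE : forall N, ((uu R N)%:E <= \esum_(x in [set w | inG w]) (farey_term R x)%:E)%E.
  move=> M; apply: esum_ge; exists (GN M).
    by split; [exact: GN_fin | move=> w []].
  by rewrite fsumEFin //; exact: GN_fin.
apply/eqP; rewrite eq_le; apply/andP; split.
- apply: ge_ereal_sup => _ [X [finX XG] <-].
  have [N XN] := fin_GN _ finX XG.
  apply: (le_trans (y := (uu R N)%:E)); last by rewrite lee_fin.
  rewrite /uu -fsumEFin; last exact: GN_fin.
  apply: lee_fsum_nneg_subset => //; first exact: GN_fin.
    by move=> w; rewrite !inE => /XN.
  by move=> w _; rewrite lee_fin term_ge0.
- move: uE; case: (\esum_(x in _) _)%E => [r| |] uE.
  + rewrite /L lee_fin -(cvg_lim (@norm_hausdorff _ _) (uu_cvg R)).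
    apply: limr_le; first exact: (cvgP _ (uu_cvg R)).
    by apply: nearW => N; rewrite -lee_fin.
  + exact: leey.
  + by have := uE 0%N.
Qed.
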